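(* Let $\mathbf T$ be a countable homogeneous tournament and $\mathbf T^*$ an expansion of $\mathbf T$ as in the context. If $\mathrm{Age}(\mathbf T^* )$ has the expansion property relative to $\mathrm{Age}(\mathbf T)$, then for every positive integer $n$, $\mathrm{Age}(I_n[\mathbf T]^* )$ has the expansion property relative to $\mathrm{Age}(I_n[\mathbf T])$, where $I_n[\mathbf T]$ is the reduct of $I_n[\mathbf T]^*$ to $\{E\}$.
   Context: The age $\mathrm{Age}(\mathbf F)$ of a structure $\mathbf F$ is the class of finite structures embeddable in $\mathbf F$. Expansion property: let $L\subseteq L^*$ be relational languages, $\mathcal K$ a class of finite $L$-structures and $\mathcal K^*$ a class of finite $L^*$-structures whose $L$-reducts lie in $\mathcal K$. $\mathcal K^*$ has the expansion property relative to $\mathcal K$ if for every $\mathbf A\in\mathcal K$ there is $\mathbf B\in\mathcal K$ such that for all $\mathbf A^*,\mathbf B^*\in\mathcal K^*$ whose $L$-reducts are $\mathbf A$ and $\mathbf B$ respectively, $\mathbf A^*$ embeds into $\mathbf B^*$. A tournament is a directed graph in which every pair of distinct vertices carries exactly one directed edge; it is homogeneous if every isomorphism between finite substructures extends to an automorphism. $\mathbf T=(T,E^{\mathbf T})$ is a countable homogeneous tournament, and $\mathbf T^*$ is an expansion of $\mathbf T$ to a countable relational language $L_{\mathbf T^*}\supseteq\{E,<\}$ in which $<$ is interpreted as a linear order $<^*$ on $T$. For a positive integer $n$, $[n]=\{0,\dots,n-1\}$. The structure $I_n[\mathbf T]^*$ has universe $[n]\times T$ and language $L_{\mathbf T^*}\cup\{P_0,\dots,P_{n-1}\}$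 ($P_i$ new unary symbols), interpreted as: for each $m$-ary $R\in L_{\mathbf T^*}\setminus\{<\}$ (including $E$), $R((k_1,x_1),\dots,(k_m,x_m))$ iff $k_1=\dots=k_m$ and $R^{\mathbf T^*}(x_1,\dots,x_m)$; $(i,x)<(j,y)$ iff $i<j$, or $i=j$ and $x<^*y$; and $P_i=\{i\}\times T$. *)

(* Defs.v *)
From Stdlib Require List.
From mathcomp Require Import all_boot.
Set Warnings "-notation-overridden".
Set Implicit Arguments. Unset Strict Implicit. Unset Printing Implicit Defensive.

Record lang := Lang { sym : Type; ar : sym -> nat }.

Record structure (L : lang) := Struct {
  car : Type;
  rel : forall s : sym L, ('I_(ar s) -> car) -> Prop }.
Arguments Struct {L} car rel.
Arguments car {L} _.
Arguments rel {L} _ _ _.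

Record fstructure (L : lang) := FStruct {
  fcar : finType;
  frel : forall s : sym L, ('I_(ar s) -> fcar) -> Prop }.
Arguments FStruct {L} fcar frel.
Arguments fcar {L} _.
Arguments frel {L} _ _ _.

Definition struct_of (L : lang) (A : fstructure L) : structure L :=
  @Struct L (fcar A) (frel A).
Coercion struct_of : fstructure >-> structure.

Definition is_embedding (L : lang) (A B : structure L) (f : car A -> car B) :=
  injective f /\
  forall (s : sym L) (x : 'I_(ar s) -> car A), rel A s x <-> rel B s (f \o x).

Definition embeds (L : lang) (A B : structure L) : Prop :=
  exists f : car A -> car B, is_embedding f.

Definition Age (L : lang) (F : structure L) : fstructure L -> Prop :=
  fun A => embeds A F.

Definition reduct (L L' : lang) (i : sym L -> sym L')
  (hi : forall s, ar (i s) = ar s) (A : structure L') : structure L :=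
  @Struct L (car A) (fun s x => rel A (i s) (x \o cast_ord (hi s))).

Definition freduct (L L' : lang) (i : sym L -> sym L')
  (hi : forall s, ar (i s) = ar s) (A : fstructure L') : fstructure L :=
  @FStruct L (fcar A) (fun s x => frel A (i s) (x \o cast_ord (hi s))).

Arguments reduct {L L'} i hi A.
Arguments freduct {L L'} i hi A.

Definition expansion_property (L L' : lang) (i : sym L -> sym L')
  (hi : forall s, ar (i s) = ar s)
  (K : fstructure L -> Prop) (Kstar : fstructure L' -> Prop) : Prop :=
  forall A, K A ->
  exists B, K B /\
    forall As Bs, Kstar As -> Kstar Bs ->
      freduct i hi As = A -> freduct i hi Bs = B -> embeds As Bs.

Arguments expansion_property {L L'} i hi K Kstar.

(* Homogeneity: every isomorphism between finite substructures (domain the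
   finite set listed by D, map f restricted to D) extends to an automorphism. *)
Definition homogeneous (L : lang) (F : structure L) : Prop :=
  forall (D : list (car F)) (f : car F -> car F),
    (forall x y, List.In x D -> List.In y D -> f x = f y -> x = y) ->
    (forall (s : sym L) (x : 'I_(ar s) -> car F), (forall k, List.In (x k) D) ->
       (rel F s x <-> rel F s (f \o x))) ->
    exists g : car F -> car F,
      bijective g /\
      (forall (s : sym L) (x : 'I_(ar s) -> car F), rel F s x <-> rel F s (g \o x)) /\
      (forall x, List.In x D -> g x = f x).

(* The pair (a,b) as a tuple indexed by 'I_m (meant for m = 2). *)
Definition pair2 (X : Type) (m : nat) (a b : X) : 'I_m -> X :=
  fun k => if nat_of_ord k == 0 then a else b.

Definition LE : lang := @Lang unit (fun _ => 2).

Definition is_tournament (T : Type) (E : T -> T -> Prop) : Prop :=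
  (forall x, ~ E x x) /\
  (forall x y, x <> y -> (E x y \/ E y x) /\ ~ (E x y /\ E y x)).

Definition strict_linear_order (T : Type) (lt : T -> T -> Prop) : Prop :=
  (forall x, ~ lt x x) /\
  (forall x y z, lt x y -> lt y z -> lt x z) /\
  (forall x y, x <> y -> lt x y \/ lt y x).

(* The language of I_n[T]^*: L_{T*} together with n new unary symbols P_i. *)
Definition LIn (Lsym : Type) (ar0 : Lsym -> nat) (n : nat) : lang :=
  @Lang (Lsym + 'I_n)%type
        (fun s => match s with inl s0 => ar0 s0 | inr _ => 1 end).

Definition In_star (Lsym : eqType) (ar0 : Lsym -> nat) (sLt : Lsym)
  (T : Type) (Rs : forall s : Lsym, ('I_(ar0 s) -> T) -> Prop) (n : nat)
  : structure (LIn ar0 n) :=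
  let lexlt (p q : 'I_n * T) : Prop :=
      (p.1 < q.1)%N \/ (p.1 = q.1 /\ Rs sLt (pair2 p.2 q.2)) in
  @Struct (LIn ar0 n) ('I_n * T)%type
    (fun s => match s as s' return ('I_(@ar (LIn ar0 n) s') -> 'I_n * T) -> Prop with
     | inl s0 => fun z =>
         if s0 == sLt then
           exists p q, (forall k, z k = pair2 p q k) /\ lexlt p q
         else
           (forall k k', (z k).1 = (z k').1) /\ Rs s0 (fun k => (z k).2)
     | inr i => fun z => forall k, (z k).1 = i
     end).

(* Main.v *)
Require Import Defs.
From mathcomp Require Import all_boot.
From Stdlib Require Import ClassicalEpsilon FunctionalExtensionality PropExtensionality Classical.
Set Warnings "-notation-overridden".

Lemma eq_fstruct_iso (L : lang) (X Y : fstructure L) : X = Y ->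
  exists phi : fcar X -> fcar Y, bijective phi /\
    forall s x, Defs.frel X s x <-> Defs.frel Y s (phi \o x).
Proof. move=> ->; exists id; split; first by exists id. by move=> s x; split. Qed.
Arguments eq_fstruct_iso {L X Y}.

Lemma pair2_comp (X Y : Type) (F : X -> Y) m (a b : X) :
  F \o (@pair2 X m a b) = pair2 (F a) (F b).
Proof. apply: functional_extensionality => k; rewrite /pair2 /=; by case: ifP. Qed.

Lemma pair2_cast (X : Type) m m' (h : m' = m) (a b : X) :
  (@pair2 X m a b) \o cast_ord h = pair2 a b.
Proof. by apply: functional_extensionality => k; rewrite /pair2 /=. Qed.

Lemma tuple2 (X : Type) m (z : 'I_m -> X) (k0 k1 : 'I_m) :
  nat_of_ord k0 = 0 -> nat_of_ord k1 = 1 -> m = 2 -> forall k, z k = pair2 (z k0) (z k1) k.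
Proof.
move=> h0 h1 hm k; rewrite /pair2; case: ifP => [/eqP hk|hk]; congr z; apply: val_inj => /=.
  by rewrite hk h0.
have := ltn_ord k; rewrite h1; move: (nat_of_ord k) hk => v; rewrite hm; case: v => [|[|]] //.
Qed.

Lemma pair2_blocks (A B : Type) m (p q : A * B) : p.1 = q.1 ->
  forall k k', (@pair2 _ m p q k).1 = (@pair2 _ m p q k').1.
Proof. move=> h k k'; rewrite /pair2; do 2 case: ifP => _ //. Qed.

Theorem mainTheorem8
  (Lsym : countType) (ar0 : Lsym -> nat) (sE sLt : Lsym)
  (hE : ar0 sE = 2) (hLt : ar0 sLt = 2) (hEL : sE <> sLt)
  (T : countType) (Rs : forall s : Lsym, ('I_(ar0 s) -> T) -> Prop)
  (Ttour : is_tournament (fun x y : T => Rs sE (pair2 x y)))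
  (Thom : homogeneous
            (reduct (L := LE) (L' := Lang ar0) (fun _ => sE) (fun _ => hE)
                    (@Struct (Lang ar0) T Rs)))
  (Tlin : strict_linear_order (fun x y : T => Rs sLt (pair2 x y)))
  (hEP : expansion_property (L := LE) (L' := Lang ar0) (fun _ => sE) (fun _ => hE)
           (Age (reduct (L := LE) (L' := Lang ar0) (fun _ => sE) (fun _ => hE)
                   (@Struct (Lang ar0) T Rs)))
           (Age (@Struct (Lang ar0) T Rs))) :
  forall n : nat, (0 < n)%N ->
    expansion_property (L := LE) (L' := LIn ar0 n) (fun _ => inl sE) (fun _ => hE)
      (Age (reduct (L := LE) (L' := LIn ar0 n) (fun _ => inl sE) (fun _ => hE)
              (In_star sLt Rs n)))
      (Age (In_star sLt Rs n)).
Proof.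
move=> n n0 A HA.
pose I := In_star sLt Rs n.
have hE0 : 0 < ar0 sE by rewrite hE.
have hE1 : 1 < ar0 sE by rewrite hE.
have hL0 : 0 < ar0 sLt by rewrite hLt.
have hL1 : 1 < ar0 sLt by rewrite hLt.
pose kL0 := Ordinal hL0. pose kL1 := Ordinal hL1.
pose kE0 := Ordinal hE0. pose kE1 := Ordinal hE1.
have InE : forall s0 (z : 'I_(ar0 s0) -> 'I_n * T), s0 != sLt ->
   (Defs.rel I (inl s0) z <-> (forall k k', (z k).1 = (z k').1) /\ Rs s0 (snd \o z)).
  by move=> s0 z h; rewrite /I /In_star /= (negbTE h).
have hEL' : sE != sLt by apply/eqP.
pose lexlt (p q : 'I_n * T) : Prop :=
      (p.1 < q.1)%N \/ (p.1 = q.1 /\ Rs sLt (pair2 p.2 q.2)).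
have InLt : forall (z : 'I_(ar0 sLt) -> 'I_n * T),
   Defs.rel I (inl sLt) z <-> lexlt (z kL0) (z kL1).
  move=> z; rewrite /I /In_star /= eqxx; split.
    by move=> [p [q [Hz Hl]]]; rewrite !Hz /pair2 /=.
  move=> Hl; exists (z kL0), (z kL1); split => //.
  exact: tuple2.
have InP : forall i (z : 'I_1 -> 'I_n * T),
   Defs.rel I (inr i) z <-> forall k, (z k).1 = i by [].
case: (pickP (fun _ : fcar A => true)) => [a0 _ | Hemp]; last first.
  exists A; split; first by [].
  move=> As Bs [fA [fAinj fArel]] [fB [fBinj fBrel]] eA eB.
  have [phiA [_ hphiA]] := eq_fstruct_iso eA.
  have F0 : forall a : fcar As, False by move=> a; have := Hemp (phiA a).
  exists (fun a => match F0 a with end); split.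
    by move=> a; case: (F0 a).
  move=> s x; rewrite fArel fBrel.
  have -> // : fA \o x = fB \o ((fun a => match F0 a with end) \o x).
  by apply: functional_extensionality => k; case: (F0 (x k)).
have [fA0 [fA0inj fA0rel]] := HA.
pose t0 := (fA0 a0).2.
pose Tred := reduct (L := LE) (L' := Lang ar0) (fun _ => sE) (fun _ => hE)
                    (@Struct (Lang ar0) T Rs).
pose AC (C : {set fcar A}) : fstructure LE :=
  @FStruct LE {x : fcar A | x \in C} (fun s y => Defs.frel A s (val \o y)).
have HF : forall C : {set fcar A}, exists p : {B' : fstructure LE & fcar B' -> T},
   Age Tred (AC C) -> is_embedding (A := projT1 p) (B := Tred) (projT2 p) /\
     (forall As' Bs', Age (@Struct (Lang ar0) T Rs) As' -> Age (@Struct (Lang ar0) T Rs) Bs' ->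
       freduct (L := LE) (L' := Lang ar0) (fun _ => sE) (fun _ => hE) As' = AC C ->
       freduct (L := LE) (L' := Lang ar0) (fun _ => sE) (fun _ => hE) Bs' = projT1 p ->
       embeds As' Bs').
  move=> C; case: (classic (Age Tred (AC C))) => h; last first.
    by exists (existT _ (AC C) (fun _ => t0)).
  have [B' [[e he] HB']] := hEP _ h.
  by exists (existT _ B' e).
pose F C := proj1_sig (constructive_indefinite_description _ (HF C)).
have HFs C : Age Tred (AC C) -> _ := proj2_sig (constructive_indefinite_description _ (HF C)).
pose s := t0 :: flatten [seq [seq projT2 (F C) b | b <- enum (fcar (projT1 (F C)))]
                       | C <- enum {set fcar A}].
pose ST := seq_sub s.
pose iota (b : 'I_n * ST) : 'I_n * T := (b.1, ssval b.2).
pose BB : fstructure LE := @FStruct LE ('I_n * ST)%type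
   (fun st z => Defs.rel (reduct (L := LE) (L' := LIn ar0 n) (fun _ => inl sE) (fun _ => hE) I) st (iota \o z)).
exists BB; split.
  exists iota; split; last by [].
  by move=> [i x] [j y] [/= -> /val_inj ->].
move=> As Bs [fA [fAinj fArel]] [fB [fBinj fBrel]] eA eB.
have [phiA [[psiA c1A c2A] hphiA]] := eq_fstruct_iso eA.
have [phiB [[psiB c1B c2B] hphiB]] := eq_fstruct_iso eB.
pose fA' := fA \o psiA.
pose fB' := fB \o psiB.
have fA'inj : injective fA' by apply: inj_comp => //; exact: can_inj c2A.
have fB'inj : injective fB' by apply: inj_comp => //; exact: can_inj c2B.
have hAE : forall y : 'I_2 -> fcar A, Defs.frel A tt y <->
     Defs.rel I (inl sE) ((fA' \o y) \o cast_ord hE).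
  move=> y; have := hphiA tt (psiA \o y).
  have -> : phiA \o (psiA \o y) = y.
    by apply: functional_extensionality => k /=; rewrite c2A.
  move=> <-; exact: (fArel (inl sE) ((psiA \o y) \o cast_ord hE)).
have hBE : forall y : 'I_2 -> fcar BB, Defs.frel BB tt y <->
     Defs.rel I (inl sE) ((fB' \o y) \o cast_ord hE).
  move=> y; have := hphiB tt (psiB \o y).
  have -> : phiB \o (psiB \o y) = y.
    by apply: functional_extensionality => k /=; rewrite c2B.
  move=> <-; exact: (fBrel (inl sE) ((psiB \o y) \o cast_ord hE)).
pose blk (b : fcar BB) := (fB' b).1.
have BBE : forall b b' : fcar BB, Defs.frel BB tt (pair2 b b') <->
     b.1 = b'.1 /\ Rs sE (pair2 (ssval b.2) (ssval b'.2)).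
  move=> b b'.
  have -> : Defs.frel BB tt (pair2 b b') = Defs.rel I (inl sE) ((iota \o pair2 b b') \o cast_ord hE) by [].
  rewrite pair2_comp pair2_cast InE // pair2_comp /=.
  split => [[/(_ kE0 kE1) /= -> //]|[h1 h2]]; split => //.
  exact: pair2_blocks.
have BBE' : forall b b' : fcar BB, Defs.frel BB tt (pair2 b b') <->
     blk b = blk b' /\ Rs sE (pair2 (fB' b).2 (fB' b').2).
  move=> b b'; rewrite hBE pair2_comp pair2_cast InE // pair2_comp.
  split => [[h1 h2]|[h1 h2]]; split => //.
    by move: (h1 kE0 kE1); rewrite /pair2 /=.
  exact: pair2_blocks.
have same_blk : forall j (t t' : ST), blk (j, t) = blk (j, t').
  move=> j t t'; case: (eqVneq t t') => [-> // | ne].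
  have ne' : ssval t <> ssval t' by move=> h; move/eqP: ne; apply; exact: val_inj.
  have [[h|h] _] := Ttour.2 _ _ ne'.
    by have /BBE' [-> _] : Defs.frel BB tt (pair2 (j, t) (j, t')) by apply/BBE.
  by have /BBE' [-> _] : Defs.frel BB tt (pair2 (j, t') (j, t)) by apply/BBE.
pose t0s : ST := @SeqSub _ s t0 (mem_head t0 _).
pose sigma (j : 'I_n) := blk (j, t0s).
have sigma_inj : injective sigma.
  move=> j j' h; case: (eqVneq (fB' (j, t0s)).2 (fB' (j', t0s)).2) => [e|ne].
    have : fB' (j, t0s) = fB' (j', t0s).
      by rewrite [fB' (j, t0s)]surjective_pairing [fB' (j', t0s)]surjective_pairing e; congr pair.
    by move/fB'inj => [].
  have [[hh|hh] _] := Ttour.2 _ _ (elimN eqP ne).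
    by have /BBE [] : Defs.frel BB tt (pair2 (j, t0s) (j', t0s)) by apply/BBE'.
  by have /BBE [] : Defs.frel BB tt (pair2 (j', t0s) (j, t0s)) by apply/BBE'.
have [sigmainv csig1 csig2] := injF_bij sigma_inj.
have Hblock : forall i : 'I_n, exists G : fcar A -> fcar BB,
  (forall c, blk (G c) = i) /\
  (forall c c', (fA' c).1 = i -> (fA' c').1 = i -> G c = G c' -> c = c') /\
  (forall s0 (x : 'I_(ar0 s0) -> fcar A), (forall k, (fA' (x k)).1 = i) ->
     (Rs s0 (snd \o (fA' \o x)) <-> Rs s0 (snd \o (fB' \o (G \o x))))).
  move=> i.
  pose C := [set c | (fA' c).1 == i].
  pose j := sigmainv i.
  have hC : forall c, (c \in C) = ((fA' c).1 == i) by move=> c; rewrite inE.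
  have hv : forall c : {x : fcar A | x \in C}, (fA' (val c)).1 = i.
    by move=> c; have := valP c; rewrite hC => /eqP.
  pose emb (c : {x : fcar A | x \in C}) := (fA' (val c)).2.
  have emb_inj : injective emb.
    move=> c c' e0; have e : (fA' (val c)).2 = (fA' (val c')).2 := e0.
    apply: val_inj; apply: fA'inj.
    by rewrite [fA' (val c)]surjective_pairing [fA' (val c')]surjective_pairing e !hv.
  have ACage : Age Tred (AC C).
    exists emb; split => //; move=> [] y.
    rewrite /= hAE InE //; split => [[_ h] //|h]; split => // k k'.
    by rewrite /= !hv.
  have [he HB'] := HFs C ACage.
  have es : forall b, projT2 (F C) b \in s.
    move=> b; rewrite inE; apply/orP; right; apply/flattenP.
    exists [seq projT2 (F C) b0 | b0 <- enum (fcar (projT1 (F C)))].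
      by apply/mapP; exists C; rewrite ?mem_enum.
    by apply: map_f; rewrite mem_enum.
  pose eC' (b : fcar (projT1 (F C))) : ST := @SeqSub _ s (projT2 (F C) b) (es b).
  have eC'_inj : injective eC'.
    by move=> b b' /(f_equal val) /= h; exact: he.1 h.
  pose As' : fstructure (Lang ar0) := @FStruct (Lang ar0) {x : fcar A | x \in C}
     (fun s0 y => Rs s0 (snd \o (fA' \o (val \o y)))).
  pose Bs' : fstructure (Lang ar0) := @FStruct (Lang ar0) (fcar (projT1 (F C)))
     (fun s0 y => Rs s0 (snd \o (fB' \o ((fun b => (j, eC' b)) \o y)))).
  have As'age : Age (@Struct (Lang ar0) T Rs) As'.
    by exists emb; split => // s0 y; split.
  have Bs'age : Age (@Struct (Lang ar0) T Rs) Bs'.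
    exists (fun b => (fB' (j, eC' b)).2); split; last by move=> s0 y; split.
    move=> b b' h; apply: eC'_inj; have hp : (j, eC' b) = (j, eC' b'); last exact: (f_equal snd hp).
    apply: fB'inj; rewrite [fB' (j, eC' b)]surjective_pairing [fB' (j, eC' b')]surjective_pairing h.
    by congr pair; exact: (same_blk j (eC' b) (eC' b')).
  have eA' : freduct (L := LE) (L' := Lang ar0) (fun _ => sE) (fun _ => hE) As' = AC C.
    rewrite /freduct /AC /=; congr FStruct.
    apply: functional_extensionality_dep => -[]; apply: functional_extensionality => y.
    apply: propositional_extensionality.
    rewrite hAE InE //; split => [h|[_ h]] //; split => // k k'; by rewrite /= !hv.
  have eB' : freduct (L := LE) (L' := Lang ar0) (fun _ => sE) (fun _ => hE) Bs' = projT1 (F C).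
    apply: (@eq_trans _ _ (@FStruct LE (fcar (projT1 (F C))) (Defs.frel (projT1 (F C))))); last first.
      by case: (projT1 (F C)).
    rewrite /freduct /=; congr FStruct.
    apply: functional_extensionality_dep => -[]; apply: functional_extensionality => y.
    apply: propositional_extensionality.
    have h0 := he.2 tt y.
    pose z := (fun b => (j, eC' b)) \o y.
    have h1 : Defs.frel BB tt z <-> Rs sE ((projT2 (F C) \o y) \o cast_ord hE).
      have -> : Defs.frel BB tt z = Defs.rel I (inl sE) ((iota \o z) \o cast_ord hE) by [].
      rewrite InE //; split => [[_ h] //|h]; split => //.
    have h2 : Defs.frel BB tt z <-> Rs sE (snd \o ((fB' \o z) \o cast_ord hE)).
      rewrite hBE InE //; split => [[_ h] //|h]; split => // k k'.
      exact: same_blk.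
    split => h.
      by apply/h0; apply/h1; apply/h2.
    by apply/h2; apply/h1; apply/h0.
  have [g [ginj grel]] := HB' As' Bs' As'age Bs'age eA' eB'.
  pose G (c : fcar A) : fcar BB :=
    (j, if (insub c : option {x : fcar A | x \in C}) is Some c' then eC' (g c') else t0s).
  have Gv : forall c (hc : c \in C), G c = (j, eC' (g (Sub c hc))).
    move=> c hc; rewrite /G; case: insubP => [u hu eu|]; last by rewrite hc.
    by congr (j, eC' (g _)); apply: val_inj; rewrite SubK.
  exists G; split; [|split].
  - move=> c; rewrite /G (same_blk j _ t0s); exact: csig2.
  - move=> c c' hc hc'.
    have hc1 : c \in C by rewrite hC hc.
    have hc1' : c' \in C by rewrite hC hc'.
    rewrite (Gv c hc1) (Gv c' hc1') => /(f_equal snd) /= /eC'_inj /ginj /(f_equal val).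
    by rewrite !SubK.
  - move=> s0 x hx.
    have hx' : forall k, x k \in C by move=> k; rewrite hC hx.
    pose y k : {x : fcar A | x \in C} := Sub (x k) (hx' k).
    have eG : G \o x = (fun b => (j, eC' b)) \o (g \o y).
      by apply: functional_extensionality => k; rewrite /= (Gv _ (hx' k)).
    rewrite eG; exact: (grel s0 y).
pose GG i := proj1_sig (constructive_indefinite_description _ (Hblock i)).
have HG i := proj2_sig (constructive_indefinite_description _ (Hblock i)).
pose g' c := GG ((fA' c).1) c.
have P1 : forall c, (fB' (g' c)).1 = (fA' c).1 by move=> c; exact: (HG _).1 c.
have P2 : injective g'.
  move=> c c' e.
  have hb : (fA' c).1 = (fA' c').1 by rewrite -!P1 e.
  apply: (HG ((fA' c).1)).2.1 => //.
  by move: e; rewrite /g' -hb.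
have P3 : forall s0 (x : 'I_(ar0 s0) -> fcar A) i, (forall k, (fA' (x k)).1 = i) ->
    (Rs s0 (snd \o (fA' \o x)) <-> Rs s0 (snd \o (fB' \o (g' \o x)))).
  move=> s0 x i hx.
  have -> : g' \o x = GG i \o x by apply: functional_extensionality => k; rewrite /= /g' hx.
  exact: (HG i).2.2.
have Core : forall (st : sym (LIn ar0 n)) x,
    Defs.rel I st (fA' \o x) <-> Defs.rel I st (fB' \o (g' \o x)).
  case=> [s0|i0] x.
    case: (eqVneq s0 sLt) => [es|ns].
      subst s0.
      rewrite !InLt /lexlt /= !P1.
      have key : (fA' (x kL0)).1 = (fA' (x kL1)).1 ->
          (Rs sLt (pair2 (fA' (x kL0)).2 (fA' (x kL1)).2) <->
           Rs sLt (pair2 (fB' (g' (x kL0))).2 (fB' (g' (x kL1))).2)).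
        move=> hb; have := P3 sLt (pair2 (x kL0) (x kL1)) ((fA' (x kL0)).1).
        rewrite !pair2_comp; apply => k; rewrite /pair2; by case: ifP.
      split => [[h|[hb h]]|[h|[hb h]]]; [left | right; split => //; apply/key
                                       | left | right; split => //; apply/key] => //.
    rewrite !InE //.
    have hbl : (forall k k', ((fA' \o x) k).1 = ((fA' \o x) k').1) <->
               (forall k k', ((fB' \o (g' \o x)) k).1 = ((fB' \o (g' \o x)) k').1).
      by split=> H k k'; move: (H k k'); rewrite /= !P1.
    have hrs : (forall k k', ((fA' \o x) k).1 = ((fA' \o x) k').1) ->
               (Rs s0 (snd \o (fA' \o x)) <-> Rs s0 (snd \o (fB' \o (g' \o x)))).
      move=> H; have [i hi] : exists i, forall k, (fA' (x k)).1 = i.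
        case: (classic (exists k : 'I_(ar0 s0), True)) => [[k0 _]|nk].
          by exists (fA' (x k0)).1 => k; exact: (H k k0).
        by exists (Ordinal n0) => k; exfalso; apply: nk; exists k.
      exact: P3 hi.
    split => [[H1 H2]|[H1 H2]]; split.
    - exact/hbl.
    - exact/(hrs H1).
    - exact/hbl.
    - exact/(hrs (proj2 hbl H1)).
  rewrite !InP; split => H k; have := H k; by rewrite /= P1.
exists ((psiB \o g') \o phiA); split.
  apply: inj_comp; [apply: inj_comp; [exact: can_inj c2B | exact: P2] | exact: can_inj c1A].
move=> st x; rewrite fArel fBrel.
have -> : fA \o x = fA' \o (phiA \o x).
  by apply: functional_extensionality => k; rewrite /= /fA' /= c1A.
exact: (Core st (phiA \o x)).
Qed.
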